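(* Consider the DSA algorithm described in the context, under conditions (a)–(c) on the weights and assuming every $f_{n,i}$ is differentiable and $\mu$-strongly convex with $L$-Lipschitz gradient. Let $q_{\min}:=\min_n q_n$ and $q_{\max}:=\max_n q_n$. Then for all $t>0$, $$\mathbb{E}\left[p^{t+1}\mid\mathcal{F}^t\right]\le\left[1-\frac1{q_{\max}}\right]p^t+\frac1{q_{\min}}\left[f(\mathbf{x}^t)-f(\mathbf{x}^* )-\nabla f(\mathbf{x}^* )^T(\mathbf{x}^t-\mathbf{x}^* )\right].$$
   Context: Problem: a connected network of $N$ nodes; node $n$ holds $q_n$ functions $f_{n,i}:\mathbb{R}^p\to\mathbb{R}$, each differentiable, $\mu$-strongly convex, with $L$-Lipschitz gradient; $f_n:=\frac1{q_n}\sum_i f_{n,i}$, $\tilde{\mathbf{x}}^*:=\arg\min_{\mathbf{x}}\sum_n f_n(\mathbf{x})$. For $\mathbf{x}=[\mathbf{x}_1;\dots;\mathbf{x}_N]\in\mathbb{R}^{Np}$, $f(\mathbf{x}):=\sum_n f_n(\mathbf{x}_n)$, $\mathbf{x}^*:=[\tilde{\mathbf{x}}^*;\dots;\tilde{\mathbf{x}}^*]$. Weights: $\mathbf{W},\tilde{\mathbf{W}}\in\mathbb{R}^{N\times N}$ with entries nonzero only for $m=n$ or $m$ a neighbor of $n$, satisfying (a) symmetry; (b) $\mathrm{null}(\mathbf{I}-\tilde{\mathbf{W}})\supseteq\mathrm{span}(\mathbf{1})$, $\mathrm{null}(\mathbf{I}-\mathbf{W})=\mathrm{span}(\mathbf{1})$,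 $\mathrm{null}(\tilde{\mathbf{W}}-\mathbf{W})=\mathrm{span}(\mathbf{1})$; (c) $\mathbf{W}\preceq\tilde{\mathbf{W}}\preceq(\mathbf{I}+\mathbf{W})/2$, $\tilde{\mathbf{W}}\succ0$. $\mathbf{Z}:=\mathbf{W}\otimes\mathbf{I}_p$, $\tilde{\mathbf{Z}}:=\tilde{\mathbf{W}}\otimes\mathbf{I}_p$. DSA: stepsize $\alpha>0$, initial $\mathbf{x}_n^0$, $\mathbf{y}_{n,i}^0=\mathbf{x}_n^0$. At each $t\ge0$ node $n$ draws $i_n^t$ uniformly from $\{1,\dots,q_n\}$ independently of the past, sets $\hat{\mathbf{g}}_n^t:=\nabla f_{n,i_n^t}(\mathbf{x}_n^t)-\nabla f_{n,i_n^t}(\mathbf{y}_{n,i_n^t}^t)+\frac1{q_n}\sum_{i}\nabla f_{n,i}(\mathbf{y}_{n,i}^t)$, and $\mathbf{y}_{n,i}^{t+1}=\mathbf{x}_n^t$ if $i=i_n^t$, else $\mathbf{y}_{n,i}^{t+1}=\mathbf{y}_{n,i}^t$. With $\hat{\mathbf{g}}^t:=[\hat{\mathbf{g}}_1^t;\dots;\hat{\mathbf{g}}_N^t]$: $\mathbf{x}^1=\mathbf{Z}\mathbf{x}^0-\alpha\hat{\mathbf{g}}^0$, $\mathbf{x}^{t+1}=(\mathbf{I}+\mathbf{Z})\mathbf{x}^t-\tilde{\mathbf{Z}}\mathbf{x}^{t-1}-\alpha[\hat{\mathbf{g}}^t-\hat{\mathbf{g}}^{t-1}]$ for $t\ge1$.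 $\mathcal{F}^t$ is the sigma-algebra of the history up to time $t$. Define $$p^t:=\sum_{n=1}^N\frac1{q_n}\sum_{i=1}^{q_n}\left(f_{n,i}(\mathbf{y}_{n,i}^t)-f_{n,i}(\tilde{\mathbf{x}}^* )-\nabla f_{n,i}(\tilde{\mathbf{x}}^* )^T(\mathbf{y}_{n,i}^t-\tilde{\mathbf{x}}^* )\right).$$ *)

(* Defs.v *)
From HB Require Import structures.
From mathcomp Require Import all_boot all_order all_algebra.
From mathcomp Require Import all_classical all_reals all_analysis.
Set Implicit Arguments. Unset Strict Implicit. Unset Printing Implicit Defensive.
Import Order.TTheory GRing.Theory Num.Theory.
Local Open Scope ring_scope.

Definition dotp (R : realType) (p : nat) (u v : 'rV[R]_p) : R :=
  \sum_(j < p) u 0 j * v 0 j.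
Definition norm2 (R : realType) (p : nat) (v : 'rV[R]_p) : R :=
  Num.sqrt (dotp v v).

Definition qform (R : realType) (N : nat) (A : 'M[R]_N) (v : 'cV[R]_N) : R :=
  (v^T *m A *m v) 0 0.

(* Conditions (a)-(c) on the weights, for a network given by a symmetric
   irreflexive connected adjacency relation [adj] on the N nodes. *)
Definition weights_ok (R : realType) (N : nat) (adj : rel 'I_N)
    (W Wt : 'M[R]_N) : Prop :=
  (forall n m, W n m != 0 -> m = n \/ adj n m) /\
  (forall n m, Wt n m != 0 -> m = n \/ adj n m) /\
  W^T = W /\ Wt^T = Wt /\
  (forall c : R, (1%:M - Wt) *m (c *: (const_mx 1 : 'cV[R]_N)) = 0) /\
  (forall v : 'cV[R]_N, (1%:M - W) *m v = 0 <-> exists c : R, v = c *: (const_mx 1 : 'cV[R]_N)) /\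
  (forall v : 'cV[R]_N, (Wt - W) *m v = 0 <-> exists c : R, v = c *: (const_mx 1 : 'cV[R]_N)) /\
  (forall v, qform W v <= qform Wt v) /\
  (forall v, qform Wt v <= qform ((2%:R)^-1 *: (1%:M + W)) v) /\
  (forall v : 'cV[R]_N, v != 0 -> 0 < qform Wt v).

(* One realization of the random indices at a given time: node n picks
   an index in {0,..,q n - 1}. *)
Definition sel (N : nat) (q : 'I_N -> nat) := {dffun forall n : 'I_N, 'I_(q n)}.

Section DSA.
Context (R : realType) (p N : nat) (q : 'I_N -> nat)
  (g : forall n : 'I_N, 'I_(q n) -> 'rV[R]_p -> 'rV[R]_p)
  (W Wt : 'M[R]_N) (alpha : R) (x0 : 'I_N -> 'rV[R]_p).

Definition stackV := 'I_N -> 'rV[R]_p.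
Definition tableV := forall n : 'I_N, 'I_(q n) -> 'rV[R]_p.

(* (Z x)_n = sum_m W_{nm} x_m, i.e. (W (x) I_p) x *)
Definition mixW (A : 'M[R]_N) (x : stackV) : stackV :=
  fun n => \sum_(m < N) A n m *: x m.

Definition ghat (y : tableV) (x : stackV) (s : sel q) : stackV :=
  fun n => g (s n) (x n) - g (s n) (y n (s n))
           + (q n)%:R^-1 *: \sum_(i < q n) g i (y n i).

Definition yupd (y : tableV) (x : stackV) (s : sel q) : tableV :=
  fun n i => if i == s n then x n else y n i.

Definition y0 : tableV := fun n _ => x0 n.

(* dsa_state om t = (x^t, x^{t+1}, y^{t+1}, \hat g^t), where om t is the
   realization of the indices i^t_n drawn at time t. *)
Fixpoint dsa_state (om : nat -> sel q) (t : nat)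
    : stackV * stackV * tableV * stackV :=
  match t with
  | 0 => let g0 := ghat y0 x0 (om 0%N) in
         (x0, fun n => mixW W x0 n - alpha *: g0 n, yupd y0 x0 (om 0%N), g0)
  | t'.+1 =>
      let: (xa, xb, yb, ga) := dsa_state om t' in
      let gb := ghat yb xb (om t) in
      (xb, fun n => xb n + mixW W xb n - mixW Wt xa n - alpha *: (gb n - ga n),
       yupd yb xb (om t), gb)
  end.

Definition dsa_x (om : nat -> sel q) (t : nat) : stackV :=
  (dsa_state om t).1.1.1.
Definition dsa_y (om : nat -> sel q) (t : nat) : tableV :=
  match t with 0 => y0 | t'.+1 => (dsa_state om t').1.2 end.

End DSA.

Definition om_set (N : nat) (q : 'I_N -> nat) (om : nat -> sel q) (t : nat)
    (s : sel q) : nat -> sel q :=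
  fun k => if k == t then s else om k.

(* Conditional expectation E[X | F^t] at the realization om, where F^t is
   generated by the draws i^0, ..., i^{t-1}, and the draws i^t_n are uniform
   on {1..q_n}, independent across nodes and of the past. X is any quantity
   determined by the realization; E[X|F^t] averages over the draw at time t
   (for X depending only on draws up to time t, which is the case below). *)
Definition condE_t (R : realType) (N : nat) (q : 'I_N -> nat)
    (X : (nat -> sel q) -> R) (t : nat) (om : nat -> sel q) : R :=
  \sum_(s : sel q) (\prod_(n < N) ((q n)%:R : R)^-1) * X (om_set om t s).

Definition plyap (R : realType) (p N : nat) (q : 'I_N -> nat)
    (f : forall n : 'I_N, 'I_(q n) -> 'rV[R]_p -> R)
    (g : forall n : 'I_N, 'I_(q n) -> 'rV[R]_p -> 'rV[R]_p)
    (xs : 'rV[R]_p) (y : forall n : 'I_N, 'I_(q n) -> 'rV[R]_p) : R :=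
  \sum_(n < N) (q n)%:R^-1 *
    \sum_(i < q n) (f n i (y n i) - f n i xs - dotp (g n i xs) (y n i - xs)).

Definition fbar (R : realType) (p N : nat) (q : 'I_N -> nat)
    (f : forall n : 'I_N, 'I_(q n) -> 'rV[R]_p -> R) (n : 'I_N) (x : 'rV[R]_p) : R :=
  (q n)%:R^-1 * \sum_(i < q n) f n i x.
Definition gbar (R : realType) (p N : nat) (q : 'I_N -> nat)
    (g : forall n : 'I_N, 'I_(q n) -> 'rV[R]_p -> 'rV[R]_p) (n : 'I_N) (x : 'rV[R]_p)
    : 'rV[R]_p :=
  (q n)%:R^-1 *: \sum_(i < q n) g n i x.

Definition bregF (R : realType) (p N : nat) (q : 'I_N -> nat)
    (f : forall n : 'I_N, 'I_(q n) -> 'rV[R]_p -> R)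
    (g : forall n : 'I_N, 'I_(q n) -> 'rV[R]_p -> 'rV[R]_p)
    (xs : 'rV[R]_p) (x : 'I_N -> 'rV[R]_p) : R :=
  \sum_(n < N) (fbar f n (x n) - fbar f n xs - dotp (gbar g n xs) (x n - xs)).

Definition qmax (N : nat) (q : 'I_N -> nat) : nat := \big[maxn/0%N]_(n < N) q n.
Definition qmin (N : nat) (q : 'I_N -> nat) : nat := \big[minn/qmax q]_(n < N) q n.

(* Main.v *)
Require Import Defs.
From HB Require Import structures.
From mathcomp Require Import all_boot all_order all_algebra.
From mathcomp Require Import all_classical all_reals all_analysis.
Import Order.TTheory GRing.Theory Num.Theory.
Local Open Scope ring_scope.
From mathcomp Require Import ring lra.

Definition shiftI {m : nat} (k : nat) (i : 'I_m) : 'I_m :=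
  Ordinal (ltn_pmod (i + k) (leq_ltn_trans (leq0n i) (ltn_ord i))).

Lemma shiftI_inj m k : injective (@shiftI m k).
Proof.
move=> i j /(congr1 val) /= /eqP; rewrite eqn_modDr !modn_small //.
by move=> /eqP /val_inj.
Qed.

Lemma shiftI_injk m (i : 'I_m) : injective (fun k : 'I_m => shiftI k i).
Proof.
move=> k l /(congr1 val) /= /eqP; rewrite eqn_modDl !modn_small //.
by move=> /eqP /val_inj.
Qed.

Section Avg.
Variables (R : realType) (N : nat) (q : 'I_N -> nat).

Definition Tsh (n0 : 'I_N) (k : nat) (s : sel q) : sel q :=
  [ffun n => if n == n0 then shiftI k (s n) else s n].

Lemma Tsh_inj n0 k : injective (Tsh n0 k).
Proof.
move=> s s' E; apply/ffunP => n; have := congr1 (fun u : sel q => u n) E.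
rewrite /Tsh !ffunE; case: eqP => _ //; exact: shiftI_inj.
Qed.

Lemma sum_sel_coord (n0 : 'I_N) (h : 'I_(q n0) -> R) :
  (q n0)%:R * \sum_(s : sel q) h (s n0) = #|{: sel q}|%:R * \sum_j h j.
Proof.
have E k : \sum_(s : sel q) h (s n0) = \sum_(s : sel q) h (shiftI k (s n0)).
  rewrite (reindex_inj (@Tsh_inj n0 k)); apply: eq_bigr => s _.
  by rewrite /Tsh ffunE eqxx.
transitivity (\sum_(k < q n0) \sum_(s : sel q) h (shiftI k (s n0))).
  rewrite [RHS](eq_bigr (fun _ => \sum_(s : sel q) h (s n0))); last by move=> k _; rewrite -(E k).
  by rewrite sumr_const card_ord mulr_natl.
rewrite exchange_big /= mulr_natl -sumr_const; apply: eq_bigr => s _.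
by rewrite [RHS](reindex_inj (@shiftI_injk _ (s n0))).
Qed.

End Avg.

Lemma card_sel_R (R : realType) N (q : 'I_N -> nat) :
  (#|{: sel q}|%:R : R) = \prod_(n < N) (q n)%:R.
Proof.
rewrite card_dep_ffun foldrE big_map big_enum /= natr_prod.
by apply: eq_bigr => n _; rewrite card_ord.
Qed.

Lemma avg_coord (R : realType) N (q : 'I_N -> nat) (qpos : forall n, (0 < q n)%N)
  (n0 : 'I_N) (h : 'I_(q n0) -> R) :
  (\prod_(n < N) ((q n)%:R : R)^-1) * \sum_(s : sel q) h (s n0)
  = (q n0)%:R^-1 * \sum_j h j.
Proof.
have qn0 : ((q n0)%:R : R) != 0 by rewrite pnatr_eq0 -lt0n qpos.
apply: (mulfI qn0); rewrite mulrCA sum_sel_coord card_sel_R mulrA.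
have P0 : \prod_(n < N) ((q n)%:R : R) != 0.
  by apply/prodf_neq0 => n _; rewrite pnatr_eq0 -lt0n qpos.
by rewrite prodfV mulVf // mul1r mulrA mulfV // mul1r.
Qed.

Lemma avg_const (R : realType) N (q : 'I_N -> nat) (qpos : forall n, (0 < q n)%N) (a : R) :
  (\prod_(n < N) ((q n)%:R : R)^-1) * \sum_(s : sel q) a = a.
Proof.
rewrite sumr_const -mulr_natr card_sel_R mulrCA prodfV mulVf ?mulr1 //.
by apply/prodf_neq0 => n _; rewrite pnatr_eq0 -lt0n qpos.
Qed.

Section State.
Variables (R : realType) (p N : nat) (q : 'I_N -> nat)
  (g : forall n : 'I_N, 'I_(q n) -> 'rV[R]_p -> 'rV[R]_p)
  (W Wt : 'M[R]_N) (alpha : R) (x0 : 'I_N -> 'rV[R]_p).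

Lemma state_dep (om1 om2 : nat -> sel q) t :
  (forall k, (k <= t)%N -> om1 k = om2 k) ->
  dsa_state g W Wt alpha x0 om1 t = dsa_state g W Wt alpha x0 om2 t.
Proof.
elim: t => [|t IH] H /=; first by rewrite H.
rewrite IH; last by move=> k hk; apply: H; exact: leqW.
by rewrite H.
Qed.

Lemma y_step (om : nat -> sel q) t :
  dsa_y g W Wt alpha x0 om t.+2 =
  yupd (dsa_y g W Wt alpha x0 om t.+1) (dsa_x g W Wt alpha x0 om t.+1) (om t.+1).
Proof.
rewrite /dsa_y /dsa_x /=.
by case: (dsa_state g W Wt alpha x0 om t) => [[[xa xb] yb] ga].
Qed.

Lemma set_past (om : nat -> sel q) t s :
  dsa_state g W Wt alpha x0 (om_set om t.+1 s) t = dsa_state g W Wt alpha x0 om t.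
Proof.
apply: state_dep => k hk; rewrite /om_set.
by have -> : (k == t.+1) = false by apply/negbTE; rewrite neq_ltn ltnS hk.
Qed.

Lemma y_cond (om : nat -> sel q) t s :
  dsa_y g W Wt alpha x0 (om_set om t.+1 s) t.+2 =
  yupd (dsa_y g W Wt alpha x0 om t.+1) (dsa_x g W Wt alpha x0 om t.+1) s.
Proof.
rewrite y_step /dsa_y /dsa_x /= set_past /om_set eqxx.
by case: (dsa_state g W Wt alpha x0 om t) => [[[xa xb] yb] ga].
Qed.
End State.

Lemma dotp_sumsl (R : realType) p (I : finType) (a : R) (v : I -> 'rV[R]_p) w :
  dotp (a *: \sum_i v i) w = a * \sum_i dotp (v i) w.
Proof.
rewrite /dotp mulr_sumr.
rewrite (eq_bigr (fun i => \sum_(j < p) a * (v i 0 j * w 0 j))); last first.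
  by move=> i _; rewrite mulr_sumr.
rewrite [RHS]exchange_big /=; apply: eq_bigr => j _.
rewrite mxE summxE -mulrA mulr_suml mulr_sumr; apply: eq_bigr => i _.
by rewrite mulrA.
Qed.

Lemma qmax_ge N (q : 'I_N -> nat) n : (q n <= qmax q)%N.
Proof. by rewrite /qmax (bigD1 n) //= leq_maxl. Qed.

Lemma qmin_le N (q : 'I_N -> nat) n : (qmin q <= q n)%N.
Proof.
rewrite /qmin unlock /index_enum /=.
have : n \in Finite.enum 'I_N by rewrite -enumT mem_enum.
elim: (Finite.enum 'I_N) => [//|a r IH] /=.
rewrite in_cons => /orP [/eqP <-|/IH h]; first exact: geq_minl.
exact: leq_trans (geq_minr _ _) h.
Qed.

Lemma qmin_gt0 N (q : 'I_N -> nat) : (0 < N)%N -> (forall n, (0 < q n)%N) -> (0 < qmin q)%N.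
Proof.
move=> N0 qp; rewrite /qmin; apply: (big_ind (fun x => 0 < x)%N).
- by apply: leq_trans (qp (Ordinal N0)) _; apply: qmax_ge.
- by move=> x y hx hy; rewrite leq_min hx hy.
- by move=> n _; exact: qp.
Qed.
Theorem lemma5 (R : realType) (p N : nat) (q : 'I_N -> nat)
  (adj : rel 'I_N)
  (f : forall n : 'I_N, 'I_(q n) -> 'rV[R]_p -> R)
  (g : forall n : 'I_N, 'I_(q n) -> 'rV[R]_p -> 'rV[R]_p)
  (mu L : R) (W Wt : 'M[R]_N) (alpha : R) (x0 : 'I_N -> 'rV[R]_p)
  (xs : 'rV[R]_p) :
  (0 < N)%N ->
  (forall n, (0 < q n)%N) ->
  (* connected network: symmetric, irreflexive, connected adjacency *)
  (forall n m, adj n m = adj m n) -> (forall n, ~~ adj n n) ->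
  (forall n m, fingraph.connect adj n m) ->
  weights_ok adj W Wt ->
  0 < mu -> 0 < L -> 0 < alpha ->
  (* each f_{n,i} differentiable with gradient g n i *)
  (forall n i x, differentiable (f n i) x) ->
  (forall n i x v, 'd (f n i) x v = dotp (g n i x) v) ->
  (* mu-strong convexity *)
  (forall n i x y, f n i x + dotp (g n i x) (y - x) + mu / 2 * (norm2 (y - x)) ^+ 2
                   <= f n i y) ->
  (* L-Lipschitz gradient *)
  (forall n i x y, norm2 (g n i x - g n i y) <= L * norm2 (x - y)) ->
  (* xs is the minimizer of sum_n f_n *)
  (forall z, \sum_(n < N) fbar f n xs <= \sum_(n < N) fbar f n z) ->
  forall (om : nat -> sel q) (t : nat), (0 < t)%N ->
    condE_t (fun om' => plyap f g xs (dsa_y g W Wt alpha x0 om' t.+1)) t om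
    <= (1 - ((qmax q)%:R : R)^-1) * plyap f g xs (dsa_y g W Wt alpha x0 om t)
       + ((qmin q)%:R : R)^-1 * bregF f g xs (dsa_x g W Wt alpha x0 om t).
Proof.
move=> N0 qp _ _ _ _ mu0 _ _ _ _ hconv _ _ om [//|t] _.
set Y := dsa_y g W Wt alpha x0 om t.+1.
set X := dsa_x g W Wt alpha x0 om t.+1.
pose phi n (i : 'I_(q n)) z := f n i z - f n i xs - dotp (g n i xs) (z - xs).
have hphi n i z : 0 <= phi n i z.
  have := hconv n i xs z; rewrite /phi.
  have : 0 <= mu / 2 * norm2 (z - xs) ^+ 2.
    by apply: mulr_ge0; [apply: divr_ge0; [exact: ltW|] | exact: sqr_ge0].
  lra.
pose a n : R := (q n)%:R^-1.
pose A n := \sum_(i < q n) phi n i (Y n i).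
pose B n := \sum_(i < q n) phi n i (X n).
have Hup s : plyap f g xs (yupd Y X s) = \sum_n a n * (A n +
    (phi n (s n) (X n) - phi n (s n) (Y n (s n)))).
  rewrite /plyap; apply: eq_bigr => n _; congr (_ * _).
  rewrite /A (bigD1 (s n)) //= [X in _ = X + _](bigD1 (s n)) //= /yupd eqxx.
  rewrite (eq_bigr (fun i => phi n i (Y n i))); last by move=> i /negbTE ->.
  rewrite /phi; ring.
have HL : condE_t (fun om' => plyap f g xs (dsa_y g W Wt alpha x0 om' t.+2)) t.+1 om
    = \sum_n a n * (A n + a n * (B n - A n)).
  rewrite /condE_t.
  rewrite (eq_bigr (fun s : sel q => (\prod_(n < N) ((q n)%:R : R)^-1) *
       \sum_n a n * (A n + (phi n (s n) (X n) - phi n (s n) (Y n (s n)))))); last first.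
    by move=> s _; rewrite y_cond Hup.
  rewrite -mulr_sumr exchange_big mulr_sumr; apply: eq_bigr => n _ /=.
  rewrite -mulr_sumr mulrCA big_split /= mulrDr (avg_const _ _ _ qp).
  rewrite (avg_coord _ _ _ qp n (fun j => phi n j (X n) - phi n j (Y n j))) sumrB.
  by [].
have HB : bregF f g xs X = \sum_n a n * B n.
  rewrite /bregF; apply: eq_bigr => n _.
  rewrite /fbar /gbar dotp_sumsl /B /phi !sumrB /a; ring.
rewrite HL HB /= -/Y.
have -> : plyap f g xs Y = \sum_n a n * A n by [].
rewrite !mulr_sumr -big_split /=; apply: ler_sum => n _.
have An : 0 <= A n by apply: sumr_ge0 => i _; exact: hphi.
have Bn : 0 <= B n by apply: sumr_ge0 => i _; exact: hphi.
have qn : (0 : R) < (q n)%:R by rewrite ltr0n qp.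
have qmx : (0 : R) < (qmax q)%:R by rewrite ltr0n; apply: leq_trans (qp n) _; apply: qmax_ge.
have qmn : (0 : R) < (qmin q)%:R by rewrite ltr0n; exact: qmin_gt0.
have h1 : (qmax q)%:R^-1 <= a n :> R.
  by rewrite /a lef_pV2 ?posrE // ler_nat qmax_ge.
have h2 : a n <= (qmin q)%:R^-1 :> R.
  by rewrite /a lef_pV2 ?posrE // ler_nat qmin_le.
have a0 : 0 <= a n by rewrite /a invr_ge0 ltW.
have p1 : 0 <= a n * A n * (a n - (qmax q)%:R^-1) by rewrite !mulr_ge0 // subr_ge0.
have p2 : 0 <= a n * B n * ((qmin q)%:R^-1 - a n) by rewrite !mulr_ge0 // subr_ge0.
nra.
Qed.
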